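(* Let $e\in\mathbb{Z}^+$, $f\in\mathbb{Z}_{\ge0}$, let $F$ be a proper flat in $\mathbb{R}^{\binom{e+2}{2}-1}$, and let $A\subseteq\mathbb{R}^2$ with $|A|=\binom{f+2}{2}$ be such that $A$ is not contained in any element of $\mathcal{C}_{\le f}$. (i) If $e\geq f$, then $|\psi_e(A)\cap F|\le 1+\dim F$. (ii) If $e<f$, then $|\psi_e(A)\cap F|\le\binom{f+2}{2}-\binom{f-e+2}{2}-\binom{e+2}{2}+2+\dim F$. (iii) If $e<f$, then $\dim\psi_d\big(A\setminus\psi_e^{-1}(F)\big)\geq\binom{f-e+2}{2}-1$ for every integer $d\geq f-e$.
   Context: For $k\in\mathbb{Z}^+$, a curve of degree $k$ is the zero set in $\mathbb{R}^2$ of a polynomial in $\mathbb{R}[x,y]$ of degree exactly $k$; $\mathcal{C}_k$ is the family of such curves, $\mathcal{C}_{\le k}:=\bigcup_{j=1}^k\mathcal{C}_j$, and $\mathcal{C}_{\le 0}:=\emptyset$. For $k\in\mathbb{Z}^+$ let $I_k=\{(i,j)\in\mathbb{Z}_{\ge 0}^2: 1\le i+j\le k\}$ (so $|I_k|=\binom{k+2}{2}-1$) and let the $k$-Veronese map be $\psi_k:\mathbb{R}^2\to\mathbb{R}^{\binom{k+2}{2}-1}$, $\psi_k(a_1,a_2)=(a_1^ia_2^j)_{(i,j)\in I_k}$. A flat is an affine subspace (translate of a linear subspace), its dimension being that of the linear subspace. For $S\subseteq\mathbb{R}^N$, $\mathrm{Fl}(S)$ is the smallest flat containing $S$ (the affine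 hull), $\mathrm{Fl}(\emptyset)=\emptyset$, and $\dim S:=\dim\mathrm{Fl}(S)$, with $\dim\emptyset=-1$. *)

(* Defs.v *)
From HB Require Import structures.
From mathcomp Require Import all_boot all_order all_algebra.
From mathcomp Require Import mpoly.
Set Implicit Arguments. Unset Strict Implicit. Unset Printing Implicit Defensive.
Import Order.TTheory GRing.Theory Num.Theory.
Local Open Scope ring_scope.

(* Exponent index set I_k = {(i,j) : 1 <= i + j <= k}; its cardinality is
   'C(k+2,2) - 1, so {ffun Ik k -> R} is R^('C(k+2,2)-1) with coordinates
   indexed by I_k exactly as in the paper. *)
Definition Ik (k : nat) : finType :=
  {p : 'I_k.+1 * 'I_k.+1 | (1 <= p.1 + p.2 <= k)%N}.

Notation Vk R k := {ffun Ik k -> R^o}.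

Definition veronese (R : ringType) (k : nat) (a : R * R) : Vk R k :=
  [ffun t : Ik k => a.1 ^+ (val t).1 * a.2 ^+ (val t).2].

Definition pt (R : ringType) (a : R * R) : 'I_2 -> R :=
  fun i => if i == ord0 then a.1 else a.2.

Definition on_zero_set (R : comRingType) (p : {mpoly R[2]}) (a : R * R) : bool :=
  p.@[pt a] == 0.

(* A curve of degree exactly k is the zero set of a polynomial of total
   degree exactly k (msize p = 1 + total degree).  A is contained in an
   element of C_{<= f}: *)
Definition in_curve_le (R : comRingType) (f : nat) (A : seq (R * R)) : Prop :=
  exists k : nat, (1 <= k <= f)%N /\
    exists p : {mpoly R[2]}, msize p = k.+1 /\ all (on_zero_set p) A.

Definition flat_mem (R : fieldType) (V : vectType R) (v0 : V) (U : {vspace V})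
  (x : V) : bool := (x - v0) \in U.

(* Fl(S): the smallest flat containing S (empty if S is empty), i.e. the
   intersection of all flats containing S. *)
Definition Fl (R : fieldType) (V : vectType R) (S : V -> Prop) : V -> Prop :=
  fun x => (exists s, S s) /\
    forall (v0 : V) (U : {vspace V}), (forall y, S y -> flat_mem v0 U y) ->
      flat_mem v0 U x.

(* has_dim S n : dim S = dim Fl(S) = n, with dim of the empty set = -1. *)
Definition has_dim (R : fieldType) (V : vectType R) (S : V -> Prop) (n : int)
  : Prop :=
  ((~ exists s, S s) /\ n = -1) \/
  exists (v0 : V) (U : {vspace V}),
    (forall x, Fl S x <-> flat_mem v0 U x) /\ n = (\dim U)%:Z.

(* Main.v *)
Require Import Defs.
From HB Require Import structures.
From mathcomp Require Import all_boot all_order all_algebra.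
From mathcomp Require Import mpoly.
From mathcomp Require Import zify ring.
From Stdlib Require Import Classical_Prop.
Import Order.TTheory GRing.Theory Num.Theory.
Local Open Scope ring_scope.
Set Implicit Arguments. Unset Strict Implicit. Unset Printing Implicit Defensive.

Section Lin.
Variable R : fieldType.

Definition mklin (aT rT : vectType R) (f : aT -> rT) (H : linear f) : {linear aT -> rT} :=
  HB.pack f (GRing.isLinear.Build R aT rT *:%R f H).
Lemma mklinE (aT rT : vectType R) (f : aT -> rT) (H : linear f) x :
  linfun (mklin H) x = f x.
Proof. by rewrite lfunE. Qed.

Lemma dim_img_inj (aT rT : vectType R) (f : 'Hom(aT, rT)) (V : {vspace aT}) :
  injective f -> \dim (f @: V) = \dim V.
Proof.
move=> inj; apply: limg_dim_eq; move/lker0P: inj => /eqP ->; exact: capv0.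
Qed.

Lemma dim_ker_le (aT rT : vectType R) (f : 'Hom(aT, rT)) (V : {vspace aT}) :
  (\dim V <= \dim (V :&: lker f) + dim rT)%N.
Proof.
rewrite -(limg_ker_dim f V) leq_add2l -dimvf; apply: dimvS; exact: subvf.
Qed.

Lemma dim_ker0_le (aT rT : vectType R) (f : 'Hom(aT, rT)) (V : {vspace aT}) :
  (forall v, v \in V -> f v = 0 -> v = 0) -> (\dim V <= dim rT)%N.
Proof.
move=> h; have := dim_ker_le f V.
suff -> : (V :&: lker f = 0)%VS by rewrite dimv0.
apply/eqP; rewrite -subv0; apply/subvP => v /memv_capP [vV]; rewrite memv_ker.
by move/eqP/(h v vV) => ->; rewrite memv0.
Qed.

Definition dotv k (l x : Vk R k) : R := \sum_t l t * x t.

Lemma dotv_linl k (x : Vk R k) : linear (fun l => dotv l x : R^o).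
Proof.
move=> a l l'; rewrite /dotv /=.
transitivity (a * \sum_t l t * x t + \sum_t l' t * x t); last by [].
rewrite mulr_sumr -big_split /=; apply: eq_bigr => t _.
by rewrite !ffunE mulrDl mulrA.
Qed.

Lemma dotvD k (l x y : Vk R k) : dotv l (x + y) = dotv l x + dotv l y.
Proof. by rewrite /dotv -big_split /=; apply: eq_bigr => t _; rewrite ffunE mulrDr. Qed.
Lemma dotvZ k (l x : Vk R k) a : dotv l (a *: x) = a * dotv l x.
Proof. by rewrite /dotv mulr_sumr; apply: eq_bigr => t _; rewrite ffunE mulrCA. Qed.
Lemma dotvN k (l x : Vk R k) : dotv l (- x) = - dotv l x.
Proof. by rewrite -scaleN1r dotvZ mulN1r. Qed.
Lemma dotvB k (l x y : Vk R k) : dotv l (x - y) = dotv l x - dotv l y.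
Proof. by rewrite dotvD dotvN. Qed.
Lemma dotv_sum k (l : Vk R k) m (F : 'I_m -> Vk R k) :
  dotv l (\sum_(i < m) F i) = \sum_(i < m) dotv l (F i).
Proof.
elim/big_rec2: _ => [|i y1 y2 _ <-]; last by rewrite dotvD.
by rewrite /dotv big1 // => t _; rewrite ffunE mulr0.
Qed.

Definition perpB k (X : {vspace Vk R k}) (l : Vk R k) : {ffun 'I_(\dim X) -> R^o} :=
  [ffun j : 'I_(\dim X) => dotv l (vbasis X)`_j].
Lemma perpB_lin k (X : {vspace Vk R k}) : linear (perpB X).
Proof. move=> a l l'; apply/ffunP => j; rewrite !ffunE; exact: (dotv_linl (vbasis X)`_j). Qed.
Definition perp k (X : {vspace Vk R k}) := lker (linfun (mklin (perpB_lin X))).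

Lemma dimZk k : \dim (fullv : {vspace (R^o * Vk R k)%type}) = (#|Ik k|).+1.
Proof. by rewrite dimvf; change (1 + #|Ik k| * 1 = (#|Ik k|).+1)%N; rewrite muln1. Qed.
Lemma dimVk k : \dim (fullv : {vspace Vk R k}) = #|Ik k|.
Proof. by rewrite dimvf; change (#|Ik k| * 1 = #|Ik k|)%N; rewrite muln1. Qed.
Lemma dimRT m : dim {ffun 'I_m -> R^o} = m.
Proof. by change (#|'I_m| * 1 = m)%N; rewrite card_ord muln1. Qed.

Lemma perp_dim k (X : {vspace Vk R k}) : (#|Ik k| <= \dim (perp X) + \dim X)%N.
Proof.
have := dim_ker_le (linfun (mklin (perpB_lin X))) fullv; rewrite capfv dimVk.
by rewrite dimRT.
Qed.

Lemma perp_orth k (X : {vspace Vk R k}) l x : l \in perp X -> x \in X -> dotv l x = 0.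
Proof.
rewrite memv_ker => /eqP hl xX.
rewrite (coord_vbasis xX) dotv_sum big1 // => i _.
rewrite dotvZ; have := congr1 (fun g : {ffun 'I_(\dim X) -> R^o} => g i) hl.
by rewrite mklinE ffunE ffunE => ->; rewrite mulr0.
Qed.

Lemma big_ord2 (T : Type) (idx : T) (op : Monoid.law idx) (F : 'I_2 -> T) :
  \big[op/idx]_(i < 2) F i = op (F 0) (F 1).
Proof. by rewrite big_ord_recl big_ord1; congr (op _ (F _)); apply: val_inj. Qed.

Definition mnm k (t : Ik k) : 'X_{1..2} :=
  [multinom (if i == ord0 then ((val t).1 : nat) else (val t).2) | i < 2].

Lemma mnm0 k (t : Ik k) : mnm t 0 = (val t).1.
Proof. by rewrite mnmE. Qed.
Lemma mnm1 k (t : Ik k) : mnm t 1 = (val t).2.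
Proof. by rewrite mnmE. Qed.

Lemma mdeg_mnm k (t : Ik k) : mdeg (mnm t) = ((val t).1 + (val t).2)%N.
Proof. by rewrite mdegE big_ord2 mnm0 mnm1. Qed.

Lemma mnm_inj k : injective (@mnm k).
Proof.
move=> s t /mnmP h; apply/val_inj.
have := h 0; have := h 1; rewrite !mnm0 !mnm1 => h1 h0.
by case: (val s) (val t) h0 h1 => [a b] [c d] /= /val_inj -> /val_inj ->.
Qed.

Lemma mnm_neq0 k (t : Ik k) : mnm t != 0%MM.
Proof. by rewrite -mdeg_eq0 mdeg_mnm -lt0n; case/andP: (valP t). Qed.

Lemma mnm_surj k (m : 'X_{1..2}) : m != 0%MM -> (mdeg m <= k)%N ->
  exists t : Ik k, mnm t = m.
Proof.
move=> m0 hk; rewrite mdegE big_ord2 /= in hk.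
have h0 : (m (0%R : 'I_2) < k.+1)%N by rewrite ltnS (leq_trans (leq_addr _ _) hk).
have h1 : (m (1%R : 'I_2) < k.+1)%N by rewrite ltnS (leq_trans (leq_addl _ _) hk).
have hp : (1 <= (Ordinal h0 : nat) + (Ordinal h1 : nat) <= k)%N.
  rewrite /= hk andbT lt0n; apply: contra m0 => /eqP e.
  rewrite -mdeg_eq0 mdegE big_ord2; exact/eqP.
exists (exist _ (Ordinal h0, Ordinal h1) hp); apply/mnmP => i.
case: i => [[|[|i]] hi] //.
- by rewrite (_ : Ordinal hi = 0) ?mnm0 //; apply: val_inj.
- by rewrite (_ : Ordinal hi = 1) ?mnm1 //; apply: val_inj.
Qed.

Lemma mcoeff_sumf (I : finType) (F : I -> {mpoly R[2]}) m :
  (\sum_i F i)@_m = \sum_i (F i)@_m.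
Proof. exact: raddf_sum. Qed.

Definition polyv k (z : (R^o * Vk R k)%type) : {mpoly R[2]} :=
  z.1%:MP + \sum_t z.2 t *: 'X_[mnm t].
Definition valz k (z : (R^o * Vk R k)%type) (a : R * R) : R :=
  z.1 + dotv z.2 (veronese k a).

Lemma polyv_eval k (z : (R^o * Vk R k)%type) a : (polyv z).@[pt a] = valz z a.
Proof.
rewrite /polyv /valz mevalD mevalC; congr (_ + _).
rewrite raddf_sum; apply: eq_bigr => t _.
change (meval (pt a) (z.2 t *: 'X_[mnm t]) = z.2 t * veronese k a t).
rewrite mevalZ mevalX big_ord2 ffunE mnm0 mnm1 /pt /=.
done.
Qed.

Lemma polyv_msize k (z : (R^o * Vk R k)%type) : (msize (polyv z) <= k.+1)%N.
Proof.
rewrite /polyv (leq_trans (msizeD_le _ _)) // geq_max msizeC.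
rewrite (leq_trans (leq_b1 _)) //=.
rewrite (leq_trans (msize_sum _ _ _)) //.
apply/bigmax_leqP => t _; rewrite (leq_trans (msizeZ_le _ _)) //.
by rewrite msizeX mdeg_mnm ltnS; case/andP: (valP t).
Qed.

Lemma polyv_coef0 k (z : (R^o * Vk R k)%type) : (polyv z)@_0 = z.1.
Proof.
rewrite /polyv mcoeffD mcoeffC eqxx mulr1 mcoeff_sumf big1 ?addr0 // => t _.
by rewrite mcoeffZ mcoeffX (negbTE (mnm_neq0 t)) mulr0.
Qed.

Lemma polyv_coefm k (z : (R^o * Vk R k)%type) t : (polyv z)@_(mnm t) = z.2 t.
Proof.
rewrite /polyv mcoeffD mcoeffC (negbTE (mnm_neq0 t)) mulr0 add0r mcoeff_sumf.
rewrite (bigD1 t) //= big1 ?addr0.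
  by rewrite mcoeffZ mcoeffX eqxx mulr1.
move=> s st; rewrite mcoeffZ mcoeffX.
by rewrite (inj_eq (@mnm_inj k)) (negbTE st) mulr0.
Qed.

Lemma polyv_eq0 k (z : (R^o * Vk R k)%type) : polyv z = 0 -> z = 0.
Proof.
move=> h; case: z h => c l h; congr (_, _).
  by have := polyv_coef0 (c, l); rewrite h mcoeff0.
apply/ffunP => t; rewrite ffunE.
by have := polyv_coefm (c, l) t; rewrite h mcoeff0.
Qed.

Lemma polyv_lin k : linear (@polyv k).
Proof.
move=> a [c l] [c' l']; rewrite /polyv /=.
rewrite scalerDr raddfD /= -!addrA; congr (_ + _).
  by rewrite -mul_mpolyC -mpolyCM.
rewrite [RHS]addrCA; congr (_ + _).
rewrite scaler_sumr -big_split /=; apply: eq_bigr => t _.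
by rewrite !ffunE scalerDl scalerA.
Qed.

Lemma polyv_small k (z : (R^o * Vk R k)%type) : (msize (polyv z) <= 1)%N -> z.2 = 0.
Proof.
move=> h; apply/ffunP => t; rewrite ffunE -polyv_coefm.
apply/eqP; rewrite mcoeff_eq0; apply: msize_mdeg_ge.
by rewrite (leq_trans h) // mdeg_mnm; case/andP: (valP t).
Qed.

Definition coefz k (p : {mpoly R[2]}) : (R^o * Vk R k)%type :=
  (p@_0, [ffun t => p@_(mnm t)]).

Lemma polyv_rec k (p : {mpoly R[2]}) : (msize p <= k.+1)%N -> polyv (coefz k p) = p.
Proof.
move=> hp; apply/mpolyP => m.
have [->|m0] := eqVneq m 0%MM; first by rewrite polyv_coef0.
have [hk|hk] := leqP (mdeg m) k.
  have [t <-] := mnm_surj m0 hk.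
  by rewrite polyv_coefm ffunE.
rewrite /polyv mcoeffD mcoeffC (negbTE m0) mulr0 add0r mcoeff_sumf big1.
  apply/esym/eqP; rewrite mcoeff_eq0; apply: msize_mdeg_ge.
  exact: leq_trans hp hk.
move=> t _; rewrite mcoeffZ mcoeffX; case: eqP => [e|]; last by rewrite mulr0.
by move: hk; rewrite -e mdeg_mnm ltnNge; case/andP: (valP t) => _ ->.
Qed.


HB.instance Definition _ k := GRing.isLinear.Build R (R^o * Vk R k)%type {mpoly R[2]}
  *:%R (@polyv k) (@polyv_lin k).

Lemma polyv0 k : polyv (0 : (R^o * Vk R k)%type) = 0.
Proof. by rewrite /polyv /= mpolyC0 add0r big1 // => t _; rewrite ffunE scale0r. Qed.
Lemma polyvD k (z w : (R^o * Vk R k)%type) : polyv (z + w) = polyv z + polyv w.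
Proof. by have := polyv_lin 1 z w; rewrite !scale1r. Qed.
Lemma polyvZ k (z : (R^o * Vk R k)%type) c : polyv (c *: z) = c *: polyv z.
Proof. by have := polyv_lin c z 0; rewrite !addr0 polyv0 addr0. Qed.

Lemma polyv_inj k : injective (@polyv k).
Proof. by move=> z w h; apply/eqP; rewrite -subr_eq0; apply/eqP/polyv_eq0; rewrite polyvD -scaleN1r polyvZ scaleN1r h subrr. Qed.

Lemma valzD k (z w : (R^o * Vk R k)%type) a : valz (z + w) a = valz z a + valz w a.
Proof. by rewrite -!polyv_eval polyvD mevalD. Qed.
Lemma valzZ k (z : (R^o * Vk R k)%type) c a : valz (c *: z) a = c * valz z a.
Proof. by rewrite -!polyv_eval polyvZ mevalZ. Qed.
Lemma valz0 k a : valz (0 : (R^o * Vk R k)%type) a = 0.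
Proof. by rewrite -!polyv_eval polyv0 meval0. Qed.

Lemma coefz_lin K : linear (@coefz K).
Proof.
move=> c p q; rewrite /coefz; congr (_, _) => /=.
  by rewrite mcoeffD mcoeffZ.
by apply/ffunP => t; rewrite !ffunE mcoeffD mcoeffZ.
Qed.

Definition embz k K (z : (R^o * Vk R k)%type) : (R^o * Vk R K)%type := coefz K (polyv z).
Lemma embz_lin k K : linear (@embz k K).
Proof. by move=> c z w; rewrite /embz polyvD polyvZ coefz_lin. Qed.

Lemma polyv_embz k K (z : (R^o * Vk R k)%type) : (k <= K)%N -> polyv (embz K z) = polyv z.
Proof. move=> kK; apply: polyv_rec; exact: leq_trans (polyv_msize z) _. Qed.
Lemma valz_embz k K (z : (R^o * Vk R k)%type) a : (k <= K)%N -> valz (embz K z) a = valz z a.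
Proof. by move=> kK; rewrite -!polyv_eval polyv_embz. Qed.
Lemma embz_inj k K : (k <= K)%N -> injective (@embz k K).
Proof. by move=> kK z w h; apply: polyv_inj; rewrite -(polyv_embz z kK) -(polyv_embz w kK) h. Qed.

End Lin.

Section Card.
Local Open Scope nat_scope.

Lemma inner_sum k (i : nat) : i <= k ->
  \sum_(j < k.+1) (i + j <= k : nat) = k.+1 - i.
Proof.
move=> ik; rewrite -(big_mkord xpredT (fun j => (i + j <= k : nat))).
rewrite (big_cat_nat (n := k.+1 - i)) //=; last by lia.
have -> : \sum_(0 <= j < k.+1 - i) (i + j <= k : nat) = k.+1 - i.
  rewrite (eq_big_nat _ _ (F2 := fun _ => 1)) ?sum_nat_const_nat ?muln1 ?subn0 //.
  by move=> j /andP[_ h]; rewrite (_ : i + j <= k) //; lia.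
rewrite (eq_big_nat _ _ (F2 := fun _ => 0)) ?sum_nat_const_nat ?muln0 ?addn0 //.
by move=> j /andP[h _]; rewrite leqNgt (_ : k < i + j) //; lia.
Qed.

Lemma outer_sum k : \sum_(i < k.+1) (k.+1 - i) = 'C(k.+2, 2).
Proof.
rewrite -(big_mkord xpredT (fun i => k.+1 - i)) big_nat_rev /= -bin2_sum.
rewrite [RHS]big_nat_recl // add0n.
by apply: eq_big_nat => i /andP[_ h]; lia.
Qed.

Lemma card_Ik k : (#|Ik k|).+1 = 'C(k.+2, 2).
Proof.
rewrite card_sig -sum1_card big_mkcond /=.
transitivity ((\sum_(i < k.+1) \sum_(j < k.+1) ((1 <= i + j <= k) : nat)).+1).
  congr S; rewrite pair_bigA; apply: eq_bigr => [[i j]] _.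
  by rewrite inE /=; case: ifP.
rewrite -outer_sum.
have e1 : forall i : 'I_k.+1, \sum_(j < k.+1) ((1 <= i + j <= k) : nat) + ((i : nat) == 0%N)
   = k.+1 - i.
  move=> i; rewrite -inner_sum; last by have := ltn_ord i; lia.
  rewrite !big_ord_recl /= addn0.
  have -> : \sum_(j < k) (0 < i + bump 0 j <= k) = \sum_(j < k) (i + bump 0 j <= k).
    by apply: eq_bigr => j _; rewrite /bump /= add1n addnS.
  rewrite addnAC; congr addn.
  by have := ltn_ord i; case: (i : nat) => [|i'] /= h; rewrite ?addn0 /=; lia.
rewrite -(eq_bigr _ (fun i _ => e1 i)) big_split /= -addn1; congr addn.
by rewrite big_ord_recl /= big1 // => i _; rewrite /bump /=.
Qed.

End Card.

Lemma ex_max_prop (P : nat -> Prop) (B : nat) : (exists n, P n) ->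
  (forall n, P n -> (n <= B)%N) -> exists n, P n /\ forall m, P m -> (m <= n)%N.
Proof.
move=> [n0 Pn0] hB.
suff : forall c, (exists n, P n /\ (B - c <= n)%N) ->
         exists n, P n /\ forall m, P m -> (m <= n)%N.
  by move/(_ B); apply; exists n0; split => //; rewrite subnn.
elim => [|c IH] [n [Pn hn]].
  by exists n; split => // m /hB hm; rewrite subn0 in hn; exact: leq_trans hm hn.
case: (classic (exists n', P n' /\ (B - c <= n')%N)) => [/IH //|hno].
exists n; split => // m Pm.
case: (leqP (B - c) m) => hm; first by exfalso; apply: hno; exists m.
by lia.
Qed.

Section Van.
Variable R : fieldType.

Definition LTf k (B : seq (R * R)) (z : (R^o * Vk R k)%type) : {ffun 'I_(size B) -> R^o} :=
  [ffun i : 'I_(size B) => valz z (nth (0, 0) B i)].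
Lemma LTf_lin k B : linear (@LTf k B).
Proof. by move=> c z w; apply/ffunP => i; rewrite !ffunE valzD valzZ. Qed.

Lemma dim_vanish k (V : {vspace (R^o * Vk R k)%type}) (B : seq (R * R)) :
  (forall z, z \in V -> (forall t, t \in B -> valz z t = 0) -> z = 0) ->
  (\dim V <= size B)%N.
Proof.
move=> h; rewrite -(dimRT R (size B)).
apply: (dim_ker0_le (f := linfun (mklin (@LTf_lin k B)))) => z zV.
rewrite mklinE => hz; apply: h => // t tB.
have ti : (index t B < size B)%N by rewrite index_mem.
have := congr1 (fun g : {ffun 'I_(size B) -> R^o} => g (Ordinal ti)) hz.
rewrite /LTf !ffunE /= nth_index //.
Qed.

Lemma dim_vanish1 (aT : vectType R) (ev : aT -> R * R -> R)
  (evlin : forall t, linear (fun x => ev x t : R^o)) (V : {vspace aT})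
  (B : seq (R * R)) (z1 : aT) :
  (forall z, z \in V -> (forall t, t \in B -> ev z t = 0) -> z \in <[z1]>%VS) ->
  (\dim V <= 1 + size B)%N.
Proof.
move=> h.
pose G (z : aT) : {ffun 'I_(size B) -> R^o} := [ffun i : 'I_(size B) => ev z (nth (0, 0) B i)].
have Glin : linear G.
  move=> c x y; apply/ffunP => i; rewrite !ffunE.
  exact: (evlin (nth (0, 0) B i) c x y).
have := dim_ker_le (linfun (mklin Glin)) V; rewrite dimRT.
suff : (\dim (V :&: lker (linfun (mklin Glin))) <= 1)%N by lia.
rewrite (leq_trans _ (leq_b1 (z1 != 0))) // -dim_vline; apply: dimvS.
apply/subvP => z /memv_capP [zV]; rewrite memv_ker mklinE => /eqP hz.
apply: h => // t tB.
have ti : (index t B < size B)%N by rewrite index_mem.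
have := congr1 (fun g : {ffun 'I_(size B) -> R^o} => g (Ordinal ti)) hz.
by rewrite /G !ffunE /= nth_index.
Qed.

Lemma embz0 k K : embz K (0 : (R^o * Vk R k)%type) = 0.
Proof.
by rewrite /embz polyv0 /coefz mcoeff0; congr (_, _); apply/ffunP => t; rewrite !ffunE mcoeff0.
Qed.

Definition jzg k (w : Vk R k) (l : Vk R k) : (R^o * Vk R k)%type := (- dotv l w, l).
Lemma jzg_lin k (w : Vk R k) : linear (jzg w).
Proof.
move=> c l l'; rewrite /jzg; congr (_, _) => /=.
have := dotv_linl w c l l'; rewrite /= => ->.
by rewrite opprD -mulrN.
Qed.
Lemma valz_jzg k (w : Vk R k) l a : valz (jzg w l) a = dotv l (veronese k a - w).
Proof. by rewrite /valz /= dotvB addrC. Qed.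

Lemma Fl_seq (V : vectType R) (s : seq V) (s0 : V) : s0 \in s ->
  forall x, Fl (fun y => y \in s) x <-> flat_mem s0 <<[seq y - s0 | y <- s]>>%VS x.
Proof.
move=> s0s x; split.
  move=> [_ H]; apply: H => y ys; rewrite /flat_mem; apply: memv_span; exact: map_f.
move=> hx; split; first by exists s0.
move=> v U' H; rewrite /flat_mem in hx *.
have hsub : (<<[seq y - s0 | y <- s]>> <= U')%VS.
  apply/span_subvP => _ /mapP [y ys ->].
  have := H y ys; have := H s0 s0s; rewrite /flat_mem => h0 hy.
  have -> : y - s0 = (y - v) - (s0 - v) by rewrite opprB addrA subrK.
  exact: memvB.
have -> : x - v = (x - s0) + (s0 - v) by rewrite addrA subrK.
apply: memvD; first exact: (subvP hsub).
exact: H.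
Qed.

End Van.

Lemma arith1 (dJ dW dQ nA dC nT dS cI dU cnt : nat) :
  dJ = dW -> dQ = nA -> (dC <= nT)%N -> (dS + dC = dJ + dQ)%N -> (dS <= cI.+1)%N ->
  (cI <= dW + dU)%N -> (cnt + nT = nA)%N -> (cnt <= 1 + dU)%N.
Proof. lia. Qed.

Lemma arith2 (cf dW nT cI dU cIe ce cnt cnt' nA : nat) :
  (cf.+1 + dW <= 1 + nT)%N -> (cIe <= dW + dU)%N -> cf.+1 = ce -> cIe.+1 = cI ->
  (cnt + cnt' = nA)%N -> nT = cnt' ->
  (cnt + ce + cI <= nA + 2 + dU)%N.
Proof. lia. Qed.

Lemma arith3 (dJ dWp dQ cf dS dd dW : nat) :
  dJ = dWp -> dQ = cf.+1 -> (dS + 0 = dJ + dQ)%N -> (dS <= dd.+1)%N ->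
  (dd <= dWp + dW)%N -> (cf <= dW)%N.
Proof. lia. Qed.

Section Main.
Variable R : fieldType.
Variables (e f : nat) (v0 : Vk R e) (U : {vspace Vk R e}).
Hypothesis hproper : U != fullv.
Variable A : seq (R * R).
Hypothesis hAsize : size A = 'C(f.+2, 2).
Hypothesis hAcurve : ~ in_curve_le f A.

Definition Fm (x : Vk R e) : bool := flat_mem v0 U x.
Definition Sp := [seq a <- A | Fm (veronese e a)].
Definition Tp := [seq a <- A | ~~ Fm (veronese e a)].

Lemma uni (p : {mpoly R[2]}) : (msize p <= f.+1)%N ->
  (forall a, a \in A -> p.@[pt a] = 0) -> p = 0.
Proof.
move=> hs hv; apply/eqP; apply/negPn/negP => p0.
have hpos : (0 < msize p)%N by rewrite lt0n msize_poly_eq0.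
have [hk1|hk1] := eqVneq (msize p) 1%N.
  move/eqP/msize_poly1P: hk1 => [c c0 pc].
  have : (0 < size A)%N by rewrite hAsize bin_gt0.
  case: A hv => // a s hv _.
  by move: (hv a (mem_head _ _)); rewrite pc mevalC => /eqP; rewrite (negbTE c0).
move/eqP: hk1 => hk1.
apply: hAcurve; exists (msize p).-1; split.
  by move: hs hpos hk1; case: (msize p) => [|[|n]] //= *; lia.
exists p; split; first by rewrite prednK.
by apply/allP => a aA; apply/eqP; exact: hv.
Qed.

Definition hvl (l : Vk R e) (a : R * R) : R := dotv l (veronese e a - v0).
Definition jz (l : Vk R e) : (R^o * Vk R e)%type := (- dotv l v0, l).

Lemma valz_jz l a : valz (jz l) a = hvl l a.
Proof. by rewrite /valz /hvl /= dotvB addrC. Qed.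

Lemma jz_lin : linear jz.
Proof.
move=> c l l'; rewrite /jz; congr (_, _) => /=.
have := dotv_linl v0 c l l'; rewrite /= => ->.
by rewrite opprD -mulrN.
Qed.

Definition Wp := perp U.

Lemma Wp_S l a : l \in Wp -> Fm (veronese e a) -> hvl l a = 0.
Proof. by move=> lW hF; apply: (perp_orth lW). Qed.


Lemma dimU_lt : (\dim U < #|Ik e|)%N.
Proof.
rewrite -(dimVk R); have := dimv_leqif_eq (subvf U).
by rewrite (negbTE hproper) => /leqifP.
Qed.

Lemma Wp_neq0 : Wp != 0%VS.
Proof.
rewrite -dimv_eq0 -lt0n; have := perp_dim U; have := dimU_lt; rewrite /Wp; lia.
Qed.

Lemma jz0 : jz 0 = 0.
Proof. by rewrite /jz /dotv big1 ?oppr0 // => t _; rewrite ffunE mul0r. Qed.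

Lemma ex_l1 : exists l1, [/\ l1 \in Wp, l1 != 0 &
  forall m, m \in Wp -> (msize (polyv (jz m)) <= msize (polyv (jz l1)))%N].
Proof.
pose P n := exists l, [/\ l \in Wp, l != 0 & msize (polyv (jz l)) = n].
have h1 : exists n, P n.
  exists (msize (polyv (jz (vpick Wp)))); exists (vpick Wp); split => //.
    exact: memv_pick.
  by rewrite vpick0 Wp_neq0.
have h2 : forall n, P n -> (n <= e.+1)%N.
  by move=> n [l [_ _ <-]]; exact: polyv_msize.
have [n [[l1 [l1W l10 hn]] hmax]] := ex_max_prop h1 h2.
exists l1; split => // m mW.
have [->|m0] := eqVneq m 0; first by rewrite jz0 polyv0 msize0.
by rewrite hn; apply: hmax; exists m.
Qed.

Lemma jz_inj : injective jz.
Proof. by move=> x y /(congr1 snd). Qed.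

Lemma part1 : (f <= e)%N -> (count (fun a => Fm (veronese e a)) A <= 1 + \dim U)%N.
Proof.
move=> fe.
pose jL := linfun (mklin jz_lin).
pose J := (jL @: Wp)%VS.
have dJ : \dim J = \dim Wp.
  by apply: dim_img_inj => x y; rewrite !mklinE; exact: jz_inj.
pose eL := linfun (mklin (@embz_lin R f e)).
pose Q := (eL @: fullv)%VS.
have dQ : \dim Q = size A.
  rewrite dim_img_inj ?dimZk ?card_Ik //.
  by move=> x y; rewrite !mklinE; exact: embz_inj.
have dJQ : (\dim (J :&: Q) <= size Tp)%N.
  apply: dim_vanish => z /memv_capP [/memv_imgP [l lW ->] /memv_imgP [q _ zq]] hz.
  rewrite mklinE in zq hz *; rewrite mklinE in zq.
  have q0 : q = 0.
    apply: polyv_eq0; apply: uni; first exact: polyv_msize.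
    move=> a aA; rewrite polyv_eval -(valz_embz q a fe) -zq.
    case hF : (Fm (veronese e a)).
      by rewrite valz_jz; apply: Wp_S.
    by apply: hz; rewrite mem_filter hF aA.
  by rewrite zq q0 /embz polyv0 /coefz; congr (_, _); rewrite ?mcoeff0 //; apply/ffunP => t; rewrite !ffunE mcoeff0.
have hsum := dimv_sum_cap J Q.
have hJQ : (\dim (J + Q) <= (#|Ik e|).+1)%N.
  by rewrite -(dimZk R e); apply: dimvS; exact: subvf.
have hp := perp_dim U.
have hc := count_predC (fun a => Fm (veronese e a)) A.
have hT : size Tp = count (predC (fun a => Fm (veronese e a))) A by rewrite size_filter.
rewrite /Wp in dJ.
have hT' : (count (fun a => Fm (veronese e a)) A + size Tp)%N = size A by rewrite hT.
exact: (arith1 dJ dQ dJQ hsum hJQ hp hT').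
Qed.

Lemma g1_neq0 l1 : l1 != 0 -> polyv (jz l1) != 0.
Proof.
move=> l10; apply/eqP => /polyv_eq0 h; move/eqP: l10; apply.
by have := congr1 snd h.
Qed.

Lemma jzZ c l : jz (c *: l) = c *: jz l.
Proof. by have := jz_lin c l 0; rewrite !addr0 jz0 addr0. Qed.
Lemma jzD l l' : jz (l + l') = jz l + jz l'.
Proof. by have := jz_lin 1 l l'; rewrite !scale1r. Qed.

Lemma msize_prod (p q : {mpoly R[2]}) a b : (msize p <= a.+1)%N -> (msize q <= b.+1)%N ->
  (msize (p * q) <= (a + b).+1)%N.
Proof.
move=> hp hq.
have [->|p0] := eqVneq p 0; first by rewrite mul0r msize0.
have [->|q0] := eqVneq q 0; first by rewrite mulr0 msize0.
rewrite msizeM // -subn1; move: hp hq; move: (msize p) (msize q) => x y; lia.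
Qed.

Lemma part2 : (e < f)%N ->
  (count (fun a => Fm (veronese e a)) A + 'C((f - e).+2, 2) + 'C(e.+2, 2)
     <= 'C(f.+2, 2) + 2 + \dim U)%N.
Proof.
move=> ef.
have [l1 [l1W l10 l1max]] := ex_l1.
pose g1 := polyv (jz l1).
have g10 : g1 != 0 := g1_neq0 l10.
pose D := ((R^o * Vk R (f - e)) * subvs_of Wp)%type.
pose ev (x : D) (t : R * R) : R := valz (jz l1) t * valz x.1 t + valz (jz (vsval x.2)) t.
have evlin : forall t, linear (fun x => ev x t : R^o).
  move=> t c x y; rewrite /ev /=.
  transitivity (c * (valz (jz l1) t * valz x.1 t + valz (jz (vsval x.2)) t) +
     (valz (jz l1) t * valz y.1 t + valz (jz (vsval y.2)) t)); last by [].
  rewrite valzD valzZ jzD jzZ valzD valzZ; ring.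
pose z1 : D := ((1, 0), - vsproj Wp l1).
have := @dim_vanish1 R D ev evlin fullv Tp z1.
have -> : \dim (fullv : {vspace D}) = ((#|Ik (f - e)|).+1 + \dim Wp)%N.
  by rewrite dimvf; change ((1 + #|Ik (f - e)| * 1) + \dim Wp = (#|Ik (f - e)|).+1 + \dim Wp)%N; rewrite muln1.
move=> H.
have {H} H : ((#|Ik (f - e)|).+1 + \dim Wp <= 1 + size Tp)%N.
  apply: H => -[h w] _ hz.
  pose mu := vsval w.
  have muW : mu \in Wp by exact: subvsP.
  have P0 : g1 * polyv h + polyv (jz mu) = 0.
    apply: uni.
      rewrite (leq_trans (msizeD_le _ _)) // geq_max; apply/andP; split.
        by rewrite (_ : f.+1 = (e + (f - e)).+1); [apply: msize_prod; exact: polyv_msize | lia].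
      by rewrite (leq_trans (polyv_msize _)) //; lia.
    move=> a aA; rewrite mevalD mevalM !polyv_eval.
    case hF : (Fm (veronese e a)).
      by rewrite !valz_jz (Wp_S l1W hF) (Wp_S muW hF) mul0r addr0.
    by have := hz a; rewrite mem_filter hF aA /ev /= => ->.
  have [ph0|ph0] := eqVneq (polyv h) 0.
    have h0 := polyv_eq0 ph0.
    rewrite ph0 mulr0 add0r in P0.
    have := polyv_eq0 P0; rewrite -jz0 => /jz_inj mu0.
    have w0 : w = 0 by apply: subvs_inj; rewrite -/mu mu0 linear0.
    by rewrite h0 w0; apply: mem0v.
  have hmu : (msize (g1 * polyv h) <= msize g1)%N.
    have e1 : g1 * polyv h = - polyv (jz mu) by apply/eqP; rewrite -addr_eq0 P0.
    by rewrite e1 msizeN; exact: l1max.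
  rewrite msizeM // in hmu.
  have hs1 : (msize (polyv h) <= 1)%N.
    have : (0 < msize g1)%N by rewrite lt0n msize_poly_eq0.
    by move: hmu; rewrite -subn1; move: (msize g1) (msize (polyv h)) => x y; lia.
  have h2 := polyv_small hs1.
  have ph : polyv h = (h.1)%:MP.
    by case: h h2 {ph0 hs1 hmu P0 hz} => c l /= ->; rewrite /polyv /= big1 ?addr0 // => t _; rewrite ffunE scale0r.
  rewrite ph mulrC mul_mpolyC -polyvZ -jzZ -polyvD -jzD in P0.
  have := polyv_eq0 P0; rewrite -jz0 => /jz_inj /eqP; rewrite addr_eq0 => /eqP hm.
  have wE : w = - ((h.1 : R) *: vsproj Wp l1).
    rewrite -[w]vsvalK -/mu -[mu]opprK -hm.
    by rewrite linearN linearZ.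
  apply/vlineP; exists h.1; rewrite wE /z1; case: h {ph ph0 hs1 hmu P0 hz wE hm} h2 => c l /= ->.
  transitivity (((c : R) *: (1 : R^o), (c : R) *: (0 : Vk R (f - e))), (c : R) *: - vsproj Wp l1); last by [].
  rewrite scalerN scaler0 /=; congr (_, _, _); exact: (esym (mulr1 (c : R))).
have hp := perp_dim U.
have hc := count_predC (fun a => Fm (veronese e a)) A.
have hT : size Tp = count (predC (fun a => Fm (veronese e a))) A by rewrite size_filter.
have c1 := card_Ik (f - e); have c2 := card_Ik e.
rewrite -hAsize; rewrite /Wp in H.
exact: (arith2 H hp c1 c2 hc hT).
Qed.

Lemma prodz : (e < f)%N -> forall h : (R^o * Vk R (f - e))%type,
  (forall t, t \in Tp -> valz h t = 0) -> h = 0.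
Proof.
move=> ef h hz.
have [l1 [l1W l10 _]] := ex_l1.
have g10 := g1_neq0 l10.
have P0 : polyv (jz l1) * polyv h = 0.
  apply: uni.
    by rewrite (_ : f.+1 = (e + (f - e)).+1); [apply: msize_prod; exact: polyv_msize | lia].
  move=> a aA; rewrite mevalM !polyv_eval.
  case hF : (Fm (veronese e a)).
    by rewrite !valz_jz (Wp_S l1W hF) mul0r.
  by rewrite hz ?mulr0 // mem_filter hF aA.
apply: polyv_eq0; move/eqP: P0; rewrite mulf_eq0 (negbTE g10) /=; exact/eqP.
Qed.

Lemma Tp_ne : (e < f)%N -> Tp != [::].
Proof.
move=> ef; apply/eqP => hT.
have := @prodz ef (1, 0); rewrite hT => /(_ (fun t ti => ltac:(by []))) /(congr1 fst) /= /eqP.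
by rewrite oner_eq0.
Qed.

Lemma part3_dim : (e < f)%N -> forall d, (f - e <= d)%N -> forall t0, t0 \in Tp ->
  (#|Ik (f - e)| <= \dim <<[seq (y - veronese d t0)%R | y <- map (veronese d) Tp]>>)%N.
Proof.
move=> ef d hd t0 t0T.
set s0 := veronese d t0.
set WT := <<[seq y - s0 | y <- map (veronese d) Tp]>>%VS.
pose WpT := perp WT.
pose jL := linfun (mklin (jzg_lin s0)).
pose J := (jL @: WpT)%VS.
have dJ : \dim J = \dim WpT.
  by apply: dim_img_inj => x y; rewrite !mklinE => /(congr1 snd).
pose eL := linfun (mklin (@embz_lin R (f - e) d)).
pose Q := (eL @: fullv)%VS.
have dQ : \dim Q = (#|Ik (f - e)|).+1.
  rewrite dim_img_inj ?dimZk //.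
  by move=> x y; rewrite !mklinE; exact: embz_inj.
have JQ : (J :&: Q = 0)%VS.
  apply/eqP; rewrite -subv0; apply/subvP => z /memv_capP [/memv_imgP [l lW ->] /memv_imgP [q _ zq]].
  rewrite mklinE in zq *; rewrite mklinE in zq.
  have q0 : q = 0.
    apply: (prodz ef) => t tT.
    rewrite -(valz_embz q t hd) -zq valz_jzg.
    apply: (perp_orth lW); apply: memv_span; apply: map_f; exact: map_f.
  by rewrite zq q0 embz0 memv0.
have hsum := dimv_sum_cap J Q.
rewrite JQ dimv0 in hsum.
have hJQ : (\dim (J + Q) <= (#|Ik d|).+1)%N.
  by rewrite -(dimZk R d); apply: dimvS; exact: subvf.
have hp := perp_dim WT.
exact: (arith3 dJ dQ hsum hJQ hp).
Qed.

End Main.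


Lemma arith4 (a c x y z u : nat) : (a <= c)%N -> (c + x + y <= z + 2 + u)%N ->
  (a%:Z <= z%:Z - x%:Z - y%:Z + 2 + u%:Z)%R.
Proof. lia. Qed.

Lemma arith5 (c C w : nat) : c.+1 = C -> (c <= w)%N -> (C%:Z - 1 <= w%:Z)%R.
Proof. lia. Qed.

Theorem lemma15 (R : rcfType) (e f : nat) (he : (0 < e)%N)
  (v0 : Vk R e) (U : {vspace Vk R e})
  (hproper : U != fullv)
  (A : seq (R * R)) (hAuniq : uniq A) (hAsize : size A = 'C(f.+2, 2))
  (hAcurve : ~ in_curve_le f A) :
  let F := flat_mem v0 U in
  let psiAF := undup [seq x <- map (veronese e) A | F x] in
  ((f <= e)%N -> (size psiAF <= 1 + \dim U)%N) /\
  ((e < f)%N -> (size psiAF)%:Z <=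
      ('C(f.+2, 2))%:Z - ('C((f - e).+2, 2))%:Z - ('C(e.+2, 2))%:Z + 2
      + (\dim U)%:Z) /\
  ((e < f)%N -> forall d : nat, (f - e <= d)%N ->
      exists n : int,
        has_dim (fun x : Vk R d =>
                   x \in map (veronese d) [seq a <- A | ~~ F (veronese e a)]) n
        /\ ('C((f - e).+2, 2))%:Z - 1 <= n).
Proof.
move=> F psiAF.
have hsz : (size psiAF <= count (fun a => Fm v0 U (veronese e a)) A)%N.
  by rewrite /psiAF (leq_trans (size_undup _)) // filter_map size_map size_filter.
split; [|split].
- move=> fe; exact: leq_trans hsz (part1 v0 U hAsize hAcurve fe).
- move=> ef; exact: arith4 hsz (part2 v0 hproper hAsize hAcurve ef).
move=> ef d hd.
have := Tp_ne v0 hproper hAsize hAcurve ef.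
case hT : (Tp v0 U A) => [//|t0 rest] _.
have t0T : t0 \in Tp v0 U A by rewrite hT mem_head.
set WT := <<[seq (y - veronese d t0)%R | y <- map (veronese d) (Tp v0 U A)]>>%VS.
exists (\dim WT)%:Z; split.
  right; exists (veronese d t0), WT; split => //.
  apply: (Fl_seq (s := map (veronese d) (Tp v0 U A))).
  exact: map_f.
apply: (arith5 (card_Ik (f - e))).
exact: (part3_dim hproper hAsize hAcurve ef hd t0T).
Qed.
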